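(* Let $D$ be an instance all of whose tuples are endogenous, let $\mathcal{Q}$ be a monotone query, and let $\bar a\in\mathcal{Q}(D)$. Then for $D'\subseteq D$, we have $(D,D',\bar a)\in\mathcal{MSSEP}^{c}(\mathcal{Q})$ if and only if there is $t\in D\smallsetminus D'$ such that $t\in\mathcal{MRC}(D,\mathcal{Q}(\bar a))$, $\Lambda:=D\smallsetminus(D'\cup\{t\})\in\mathit{Cont}(D,\mathcal{Q}(\bar a),t)$, and there is no $\Lambda'\in\mathit{Cont}(D,\mathcal{Q}(\bar a),t)$ with $|\Lambda'|<|\Lambda|$.
   Context: A query $\mathcal{Q}$ is monotone if $D_1\subseteq D_2$ implies $\mathcal{Q}(D_1)\subseteq\mathcal{Q}(D_2)$; $D\models\mathcal{Q}(\bar a)$ means $\bar a\in\mathcal{Q}(D)$. Here $D^n=D$. A tuple $\tau\in D^n$ is an actual cause for $\bar a$ if there is $\Gamma\subseteq D^n$ (contingency set) with $D\smallsetminus\Gamma\models\mathcal{Q}(\bar a)$ and $D\smallsetminus(\Gamma\cup\{\tau\})\not\models\mathcal{Q}(\bar a)$. $\mathit{Cont}(D,\mathcal{Q}(\bar a),\tau)$ is the set of subset-minimal such contingency sets $\Lambda\subseteq D^n$ (i.e. $D\smallsetminus\Lambda\models\mathcal{Q}(\bar a)$, $D\smallsetminus(\Lambda\cup\{\tau\})\not\models\mathcal{Q}(\bar a)$, and $D\smallsetminus(\Lambda'\cup\{\tau\})\models\mathcal{Q}(\bar a)$ for all $\Lambda'\subsetneq\Lambda$). The responsibility of an actual cause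 $\tau$ is $1/(|\Gamma|+1)$ with $\Gamma$ a minimum-size contingency set for $\tau$ (and $0$ for non-causes); $\mathcal{MRC}(D,\mathcal{Q}(\bar a))$ is the set of actual causes for $\bar a$ with maximum responsibility. $\mathcal{MSSEP}^{c}(\mathcal{Q})$ is the set of triples $(D,D',\bar a)$ with $\bar a\in\mathcal{Q}(D)$, $D'\subseteq D$, $\bar a\notin\mathcal{Q}(D')$, and $D'$ of maximum cardinality among subsets of $D$ with this last property (minimum source-side-effect). *)

(* Defs.v *)
From mathcomp Require Import all_boot all_order all_algebra.
Set Implicit Arguments. Unset Strict Implicit. Unset Printing Implicit Defensive.
Import Order.TTheory GRing.Theory Num.Theory.

(* Tuples range over a finite type T (the finitely many candidate tuples);
   an instance is a finite set D : {set T}.  A query Q maps an instance to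
   its set of answers (answers of type A), given as a boolean predicate:
   Q D a  means  D |= Q(a).  All tuples are endogenous, so D^n = D. *)

Section Causality.
Variables (T : finType) (A : Type).

Definition monotone_query (Q : {set T} -> pred A) : Prop :=
  forall D1 D2 : {set T}, D1 \subset D2 -> forall a, Q D1 a -> Q D2 a.

Variables (Q : {set T} -> pred A) (D : {set T}) (a : A).

Definition is_contingency (tau : T) (G : {set T}) : bool :=
  [&& G \subset D, Q (D :\: G) a & ~~ Q (D :\: (G :|: [set tau])) a].

Definition actual_cause (tau : T) : bool :=
  (tau \in D) && [exists G : {set T}, is_contingency tau G].

Definition Cont (tau : T) : {set {set T}} :=
  [set L : {set T} | is_contingency tau L &&
     [forall L' : {set T}, (L' \proper L) ==> Q (D :\: (L' :|: [set tau])) a]].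

(* size of a minimum-size contingency set (every contingency set is a
   subset of T, so #|T| is a correct neutral upper bound) *)
Definition min_cont_size (tau : T) : nat :=
  \big[minn/#|T|]_(G : {set T} | is_contingency tau G) #|G|.

Definition responsibility (tau : T) : rat :=
  (if actual_cause tau then ((min_cont_size tau).+1%:R)^-1 else 0)%R.

Definition MRC : {set T} :=
  [set tau | actual_cause tau &&
     [forall tau' : T, (responsibility tau' <= responsibility tau)%R]].

End Causality.

Definition MSSEPc (T : finType) (A : Type) (Q : {set T} -> pred A)
  (D D' : {set T}) (a : A) : Prop :=
  [/\ Q D a, D' \subset D, ~~ Q D' a &
      forall D'' : {set T}, D'' \subset D -> ~~ Q D'' a -> #|D''| <= #|D'|].

(* Main.v *)
Require Import Defs.
From mathcomp Require Import all_boot all_order all_algebra.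
From mathcomp Require Import zify.
Set Implicit Arguments. Unset Strict Implicit. Unset Printing Implicit Defensive.
Import Order.TTheory GRing.Theory Num.Theory.

Section Aux.
Variables (T : finType) (A : Type) (Q : {set T} -> pred A) (D : {set T}) (a : A).

Lemma mcs_le t G : is_contingency Q D a t G -> min_cont_size Q D a t <= #|G|.
Proof.
move=> HG; rewrite /min_cont_size.
elim: (index_enum _) (mem_index_enum G) => [//|i s IH]; rewrite inE big_cons.
case/predU1P => [<-|Hs]; first by rewrite HG geq_minl.
case: ifP => _; last exact: IH.
by rewrite geq_min IH ?orbT.
Qed.

Lemma mcs_att t G : is_contingency Q D a t G ->
  exists G', is_contingency Q D a t G' /\ #|G'| = min_cont_size Q D a t.
Proof.
move=> HG.
have : min_cont_size Q D a t = #|T| \/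
   exists G', is_contingency Q D a t G' /\ #|G'| = min_cont_size Q D a t.
  rewrite /min_cont_size; apply: (big_ind (fun x => x = #|T| \/ exists G', is_contingency Q D a t G' /\ #|G'| = x)).
  - by left.
  - move=> x y Hx Hy; rewrite /minn; case: ifP => _; by [].
  - by move=> i Hi; right; exists i.
case=> // E; exists G; split=> //.
have := mcs_le HG; rewrite E => H; apply/eqP; rewrite eqn_leq H max_card //.
Qed.

Definition minhit (S : {set T}) := [/\ S \subset D, ~~ Q (D :\: S) a &
  forall S', ~~ Q (D :\: S') a -> #|S| <= #|S'| ].

Lemma hit_ge (S X : {set T}) : minhit S -> ~~ Q (D :\: X) a -> #|S| <= #|X|.
Proof.
case=> _ _ H HX.
have E : D :\: (X :&: D) = D :\: X.
  apply/setP=> x; rewrite !inE; by case: (x \in D); rewrite ?andbT ?andbF.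
rewrite -E in HX; apply: leq_trans (H _ HX) _; exact: subset_leq_card (subsetIl _ _).
Qed.

Lemma cont_ge (S : {set T}) tau G : minhit S -> is_contingency Q D a tau G -> #|S| <= #|G|.+1.
Proof.
move=> HS /and3P[_ _ HG]; apply: leq_trans (hit_ge HS HG) _.
rewrite setUC cardsU1; by case: (tau \in G).
Qed.

Lemma cont_of (S : {set T}) t : minhit S -> t \in S -> is_contingency Q D a t (S :\ t).
Proof.
move=> HS Ht; have [Hsub HQ Hmin] := HS.
apply/and3P; split.
- exact: subset_trans (subD1set _ _) Hsub.
- apply/negPn/negP => HN; have := Hmin _ HN; rewrite (cardsD1 t S) Ht; lia.
- by rewrite setUC setD1K.
Qed.

Lemma resp_le t t' : actual_cause Q D a t -> actual_cause Q D a t' ->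
  min_cont_size Q D a t <= min_cont_size Q D a t' ->
  (responsibility Q D a t' <= responsibility Q D a t)%R.
Proof.
move=> Ht Ht' H; rewrite /responsibility Ht Ht'.
rewrite lef_pV2 ?posrE ?ltr0Sn // ler_nat; by [].
Qed.

End Aux.

Theorem proposition8 (T : finType) (A : Type) (Q : {set T} -> pred A)
  (D : {set T}) (a : A) :
  monotone_query Q -> Q D a ->
  forall D' : {set T}, D' \subset D ->
  (MSSEPc Q D D' a <->
   exists t : T,
     [/\ t \in D :\: D',
         t \in MRC Q D a,
         D :\: (D' :|: [set t]) \in Cont Q D a t &
         ~ (exists L' : {set T},
              L' \in Cont Q D a t /\ #|L'| < #|D :\: (D' :|: [set t])|)]).
Proof.
move=> _ QD D' HD'.
set S := D :\: D'.
have ES : D :\: S = D'.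
  by rewrite /S setDDr setDv set0U; apply/setIidPr.
have cardS : #|S| = #|D| - #|D'|.
  by rewrite /S cardsD (setIidPr HD').
have HD'le : #|D'| <= #|D| by exact: subset_leq_card.
have cardD2 : forall X : {set T}, X \subset D -> #|D :\: X| = #|D| - #|X|.
  by move=> X HX; rewrite cardsD (setIidPr HX).
have ELam : forall t, D :\: (D' :|: [set t]) = S :\ t by move=> t; rewrite /S setDDl.
split.
- case=> _ _ QD' Hmax.
  have HS : minhit Q D a S.
    split; first exact: subsetDl.
    + by rewrite ES.
    + move=> S' HS'.
      have HS'' : #|S| <= #|S' :&: D|.
        have E : D :\: (S' :&: D) = D :\: S'.
          apply/setP=> x; rewrite !inE; by case: (x \in D); rewrite ?andbT ?andbF.
        have := Hmax (D :\: (S' :&: D)) (subsetDl _ _); rewrite E => /(_ HS'); rewrite -E.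
        rewrite cardD2 ?subsetIr // => H.
        have := subset_leq_card (subsetIr S' D); lia.
      apply: leq_trans HS'' _; exact: subset_leq_card (subsetIl _ _).
  have : S != set0.
    apply/eqP=> E0; move: QD'; by rewrite -ES E0 setD0 QD.
  case/set0Pn=> t Ht.
  have Hc := cont_of HS Ht.
  have tD : t \in D by move: Ht; rewrite inE => /andP[].
  have cSt : #|S| = (#|S :\ t|).+1 by rewrite (cardsD1 t S) Ht.
  have act : actual_cause Q D a t by rewrite /actual_cause tD; apply/existsP; exists (S :\ t).
  exists t; split => //; rewrite ?ELam //.
  + rewrite inE act /=; apply/forallP=> t'.
    case At': (actual_cause Q D a t'); last first.
      rewrite /responsibility At' act; by rewrite invr_ge0 ler0n.
    apply: resp_le => //.
    have [G' [HG' EG']] : exists G', is_contingency Q D a t' G' /\ #|G'| = min_cont_size Q D a t'.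
      move: At' => /andP[_ /existsP[G HG]]; exact: mcs_att HG.
    apply: leq_trans (mcs_le Hc) _; rewrite -EG'; have := cont_ge HS HG'; lia.
  + rewrite inE Hc /=; apply/forallP=> L'; apply/implyP=> HL'.
    apply/negPn/negP=> HN; have := hit_ge HS HN.
    have := proper_card HL'; rewrite setUC cardsU1; case: (t \in L') => /=; lia.
  + case=> L' []; rewrite inE => /andP[HL' _]; have := cont_ge HS HL'; lia.
- case=> t []; rewrite ELam => Ht HMRC HLam Hno.
  have tD : t \in D by move: Ht; rewrite inE => /andP[].
  have ES2 : D :\: (S :\ t :|: [set t]) = D' by rewrite setUC setD1K.
  move: (HLam); rewrite inE => /andP[/and3P[_ _ QD'] _]; rewrite ES2 in QD'.
  have QS : ~~ Q (D :\: S) a by rewrite ES.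
  pose M := [arg min_(X < S | ~~ Q (D :\: X) a) #|X|].
  have HM : minhit Q D a (M :&: D).
    rewrite /M; case: arg_minnP => // X HX Hm.
    have E : D :\: (X :&: D) = D :\: X.
      apply/setP=> x; rewrite !inE; by case: (x \in D); rewrite ?andbT ?andbF.
    split; first exact: subsetIr.
    + by rewrite E.
    + move=> S' HS'; apply: leq_trans (Hm _ HS'); exact: subset_leq_card (subsetIl _ _).
  have [_ QM _] := HM.
  have : M :&: D != set0.
    apply/eqP=> E0; move: QM; by rewrite E0 setD0 QD.
  case/set0Pn=> u Hu.
  have Hcu := cont_of HM Hu.
  have Au : actual_cause Q D a u.
    rewrite /actual_cause; move: Hu; rewrite inE => /andP[_ ->]; apply/existsP; by exists ((M :&: D) :\ u).
  move: HMRC; rewrite inE => /andP[At /forallP /(_ u)].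
  rewrite /responsibility At Au lef_pV2 ?posrE ?ltr0Sn // ler_nat => Hle.
  have [G [HG EG]] : exists G, is_contingency Q D a t G /\ #|G| = min_cont_size Q D a t.
    move: At => /andP[_ /existsP[G HG]]; exact: mcs_att HG.
  have cMu : #|M :&: D| = (#|(M :&: D) :\ u|).+1 by rewrite (cardsD1 u (M :&: D)) Hu.
  have Gle : #|G| < #|M :&: D|.
    rewrite EG cMu ltnS; move: Hle; rewrite ltnS => Hle; apply: leq_trans Hle (mcs_le Hcu).
  have GC : G \in Cont Q D a t.
    rewrite inE HG /=; apply/forallP=> L'; apply/implyP=> HL'.
    apply/negPn/negP=> HN; have := hit_ge HM HN.
    have := proper_card HL'; rewrite setUC cardsU1; move: Gle; clear; case: (t \in L') => /=; lia.
  have LamG : #|S :\ t| <= #|G|.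
    rewrite leqNgt; apply/negP=> H; apply: Hno; by exists G.
  have cSt : #|S| = (#|S :\ t|).+1 by rewrite (cardsD1 t S) Ht.
  split => // D'' HD'' QD''.
  have H1 : D :\: (D :\: D'') = D'' by rewrite setDDr setDv set0U; apply/setIidPr.
  have := hit_ge HM (X := D :\: D''); rewrite H1 => /(_ QD'').
  rewrite cardD2 ?subsetDl // => H2.
  have := subset_leq_card HD''; move: H2 cSt LamG Gle cardS HD'le; clear; lia.
Qed.
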